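(* Let $G$ have a RAAG-like action on the CAT(0) cube complex $X$, let $g\in G$ be hyperbolic, and let $\alpha=(\Phi_0,\dots,\Phi_r)$ be a segment all of whose halfspaces lie in $A^+_g$. Let $h\in G$ be such that all halfspaces of $h\overline\alpha$ lie in $A^+_g$. Then either $h\overline{\alpha}>\alpha$ or $\alpha>h\overline{\alpha}$.
   Context: $\mathcal{H}(X)$ is the set of halfspaces, $\overline\Phi$ the complement of $\Phi$. Two halfspaces are nested if one of $\Phi\subseteq\Psi$, $\overline{\Phi}\subseteq\Psi$, $\Phi\subseteq\overline{\Psi}$, $\overline{\Phi}\subseteq\overline{\Psi}$ holds, transverse otherwise; tightly nested means nested with no halfspace strictly in between for the relevant strict inclusion; $\Phi\supsetneq\Psi$ tightly means $\Phi\supsetneq\Psi$ and no $\Phi'$ has $\Phi\supsetneq\Phi'\supsetneq\Psi$. The action is RAAG-like if: (i) no $\Phi$, $h\in G$ with $h\overline\Phi=\Phi$; (ii) no $\Phi$, $h$ with $\Phi$, $h\Phi$ transverse; (iii) no tightly nested $\Phi,\Phi'$ and $h$ with $\Phi$, $h\Phi'$ transverse; (iv) no $\Phi$, $h$ with $\Phi\subsetneq h\overline\Phi$ tightly. $d^c$ is the combinatorial distance on vertices, $\delta(g)=\min_x d^c(x,gx)$, $g$ hyperbolic if $\delta(g)>0$. For vertices $x,y$, $[x,y]=\{\Phi: x\notin\Phi,\ y\in\Phi\}$. For $g$ hyperbolic and $o$ a vertex with $d^c(o,go)=\delta(g)$, $A^+_g=\bigcup_{n\in\mathbb Z}[g^no,g^{n+1}o]$,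 the set of halfspaces crossed (in the direction of translation) by a combinatorial axis of $g$; it does not depend on the choice of $o$. A segment is a finite sequence $\gamma=(\Phi_0,\dots,\Phi_r)$ of halfspaces with $\Phi_i\supsetneq\Phi_{i+1}$ tightly; its reverse is $\overline\gamma=(\overline\Phi_r,\dots,\overline\Phi_0)$, and $h\gamma=(h\Phi_0,\dots,h\Phi_r)$. For segments $\gamma=(\Phi_0,\dots,\Phi_r)$, $\gamma'=(\Psi_0,\dots,\Psi_s)$ write $\gamma>\gamma'$ if $\Phi_r\supsetneq\Psi_0$. *)

(* Defs.v *)
(* A CAT(0) cube complex X is encoded by its 1-skeleton, a
   median graph (Chepoi / Roller: 1-skeleta of CAT(0) cube complexes are
   exactly the median graphs).  Vertices of X = vertices of the graph,
   combinatorial distance d^c = graph distance, halfspaces of X = vertex sets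
   H with H and its complement nonempty and geodesically convex. *)
From Stdlib Require Import ZArith List Arith.
Import ListNotations.

Section Graph.
Variable V : Type.
Variable adj : V -> V -> Prop.

Inductive walk : V -> V -> nat -> Prop :=
| walk_nil x : walk x x 0
| walk_cons x y z n : adj x y -> walk y z n -> walk x z (S n).

Definition is_dist (x y : V) (n : nat) : Prop :=
  walk x y n /\ forall m, walk x y m -> n <= m.

Definition between (x y z : V) : Prop :=
  exists a b c, is_dist x z a /\ is_dist z y b /\ is_dist x y c /\ a + b = c.

Definition is_median_graph : Prop :=
  (forall x y, adj x y -> adj y x) /\
  (forall x, ~ adj x x) /\
  (forall x y, exists n, walk x y n) /\
  (forall x y z, exists m, between x y m /\ between y z m /\ between x z m /\
      forall m', between x y m' -> between y z m' -> between x z m' -> m' = m).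

Definition convex (A : V -> Prop) : Prop :=
  forall x y z, A x -> A y -> between x y z -> A z.

Definition co (A : V -> Prop) : V -> Prop := fun v => ~ A v.

Definition halfspace (A : V -> Prop) : Prop :=
  (exists x, A x) /\ (exists x, ~ A x) /\ convex A /\ convex (co A).

Definition subset (A B : V -> Prop) : Prop := forall v, A v -> B v.
Definition seteq (A B : V -> Prop) : Prop := subset A B /\ subset B A.
Definition ssubset (A B : V -> Prop) : Prop := subset A B /\ ~ subset B A.

Definition tight_sup (A B : V -> Prop) : Prop :=
  ssubset B A /\
  forall C, halfspace C -> ~ (ssubset B C /\ ssubset C A).

Definition nested (A B : V -> Prop) : Prop :=
  subset A B \/ subset (co A) B \/ subset A (co B) \/ subset (co A) (co B).
Definition transverse (A B : V -> Prop) : Prop := ~ nested A B.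

Definition tightly_nested (A B : V -> Prop) : Prop :=
  tight_sup B A \/ tight_sup B (co A) \/ tight_sup (co B) A \/
  tight_sup (co B) (co A).

Definition crosses (x y : V) (A : V -> Prop) : Prop := ~ A x /\ A y.

Fixpoint tight_chain (l : list (V -> Prop)) : Prop :=
  match l with
  | a :: ((b :: _) as t) => tight_sup a b /\ tight_chain t
  | _ => True
  end.

Definition is_segment (l : list (V -> Prop)) : Prop :=
  l <> [] /\ Forall halfspace l /\ tight_chain l.

Definition rev_seg (l : list (V -> Prop)) : list (V -> Prop) := rev (map co l).

Definition seg_gt (l l' : list (V -> Prop)) : Prop :=
  ssubset (hd (fun _ => False) l') (last l (fun _ => False)).

End Graph.

Arguments walk {V}. Arguments is_dist {V}. Arguments between {V}.
Arguments is_median_graph {V}. Arguments convex {V}. Arguments co {V}.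
Arguments halfspace {V}. Arguments subset {V}. Arguments seteq {V}.
Arguments ssubset {V}. Arguments tight_sup {V}. Arguments nested {V}.
Arguments transverse {V}. Arguments tightly_nested {V}. Arguments crosses {V}.
Arguments tight_chain {V}. Arguments is_segment {V}. Arguments rev_seg {V}.
Arguments seg_gt {V}.

Record GroupAction (V : Type) (adj : V -> V -> Prop) := {
  grp : Type;
  mul : grp -> grp -> grp;
  one : grp;
  inv : grp -> grp;
  mulA : forall a b c, mul a (mul b c) = mul (mul a b) c;
  mul1g : forall a, mul one a = a;
  mulg1 : forall a, mul a one = a;
  mulVg : forall a, mul (inv a) a = one;
  mulgV : forall a, mul a (inv a) = one;
  act : grp -> V -> V;
  act1 : forall x, act one x = x;
  actM : forall a b x, act (mul a b) x = act a (act b x);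
  act_adj : forall a x y, adj x y -> adj (act a x) (act a y)
}.

Arguments grp {V adj}.
Arguments mul {V adj}.
Arguments one {V adj}.
Arguments inv {V adj}.
Arguments act {V adj}.

Section Action.
Variables (V : Type) (adj : V -> V -> Prop) (A : GroupAction V adj).

Fixpoint gpow (g : grp A) (n : nat) : grp A :=
  match n with O => one A | S k => mul A g (gpow g k) end.

Definition zpow (g : grp A) (z : Z) : grp A :=
  match z with
  | Z0 => one A
  | Zpos p => gpow g (Pos.to_nat p)
  | Zneg p => inv A (gpow g (Pos.to_nat p))
  end.

Definition hs_act (h : grp A) (P : V -> Prop) : V -> Prop :=
  fun v => P (act A (inv A h) v).

Definition seg_act (h : grp A) (l : list (V -> Prop)) : list (V -> Prop) :=
  map (hs_act h) l.

Definition RAAG_like : Prop :=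
  (forall P h, halfspace adj P -> ~ seteq (hs_act h (co P)) P) /\
  (forall P h, halfspace adj P -> ~ transverse P (hs_act h P)) /\
  (forall P P' h, halfspace adj P -> halfspace adj P' ->
      tightly_nested adj P P' -> ~ transverse P (hs_act h P')) /\
  (forall P h, halfspace adj P -> ~ tight_sup adj (hs_act h (co P)) P).

Definition min_disp (g : grp A) (n : nat) : Prop :=
  (exists x, is_dist adj x (act A g x) n) /\
  forall x m, is_dist adj x (act A g x) m -> n <= m.

Definition hyperbolic (g : grp A) : Prop :=
  exists n, min_disp g n /\ 0 < n.

Definition minimizer (g : grp A) (o : V) : Prop :=
  exists n, min_disp g n /\ is_dist adj o (act A g o) n.

Definition Aplus (g : grp A) (o : V) (P : V -> Prop) : Prop :=
  halfspace adj P /\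
  exists n : Z, crosses (act A (zpow g n) o) (act A (zpow g (n + 1)) o) P.

End Action.

Arguments gpow {V adj}. Arguments zpow {V adj}. Arguments hs_act {V adj}.
Arguments seg_act {V adj}. Arguments RAAG_like {V adj}. Arguments min_disp {V adj}.
Arguments hyperbolic {V adj}. Arguments minimizer {V adj}. Arguments Aplus {V adj}.

(* Main.v *)
Require Import Defs.
From Stdlib Require Import ZArith List Lia Classical.
Import ListNotations.

Section Basics.
Variables (V : Type) (adj : V -> V -> Prop) (G : GroupAction V adj).

Notation mul := (mul G). Notation inv := (inv G). Notation one := (one G).
Notation act := (act G).

Lemma act_inv_l a x : act (inv a) (act a x) = x.
Proof. rewrite <- actM, mulVg, act1. reflexivity. Qed.
Lemma act_inv_r a x : act a (act (inv a) x) = x.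
Proof. rewrite <- actM, mulgV, act1. reflexivity. Qed.

Lemma inv_inv a : inv (inv a) = a.
Proof.
  rewrite <- (mulg1 _ _ G (inv (inv a))), <- (mulVg _ _ G a), mulA, mulVg, mul1g.
  reflexivity.
Qed.

Lemma inv_mul a b : inv (mul a b) = mul (inv b) (inv a).
Proof.
  rewrite <- (mulg1 _ _ G (inv (mul a b))).
  assert (E : mul (mul a b) (mul (inv b) (inv a)) = one).
  { rewrite <- !mulA, (mulA _ _ G b), mulgV, mul1g, mulgV. reflexivity. }
  rewrite <- E, mulA, mulVg, mul1g. reflexivity.
Qed.

Lemma gpow_succ_r g k : gpow G g (S k) = mul (gpow G g k) g.
Proof.
  induction k; simpl.
  - rewrite mulg1, mul1g. reflexivity.
  - simpl in IHk. rewrite IHk at 1. rewrite mulA. reflexivity.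
Qed.

Lemma zpow_succ_l g n : zpow G g (n + 1) = mul g (zpow G g n).
Proof.
  destruct n as [|p|p]; [simpl..|].
  - rewrite mulg1. reflexivity.
  - replace (Pos.to_nat (p + 1)) with (S (Pos.to_nat p)) by lia. reflexivity.
  - destruct (Pos.succ_pred_or p) as [->| <-].
    + simpl; cbn. rewrite mulg1, mulgV. reflexivity.
    + replace (Z.neg (Pos.succ (Pos.pred p)) + 1)%Z with (Z.neg (Pos.pred p)) by lia.
      simpl. replace (Pos.to_nat (Pos.succ (Pos.pred p))) with (S (Pos.to_nat (Pos.pred p))) by lia.
      rewrite gpow_succ_r, inv_mul, mulA, mulgV, mul1g. reflexivity.
Qed.

Lemma zpow_succ_r g n : zpow G g (n + 1) = mul (zpow G g n) g.
Proof.
  destruct n as [|p|p]; [simpl..|].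
  - rewrite mulg1, mul1g. reflexivity.
  - replace (Pos.to_nat (p + 1)) with (S (Pos.to_nat p)) by lia.
    apply gpow_succ_r.
  - destruct (Pos.succ_pred_or p) as [->| <-].
    + simpl; cbn. rewrite mulg1, mulVg. reflexivity.
    + replace (Z.neg (Pos.succ (Pos.pred p)) + 1)%Z with (Z.neg (Pos.pred p)) by lia.
      simpl. replace (Pos.to_nat (Pos.succ (Pos.pred p))) with (S (Pos.to_nat (Pos.pred p))) by lia.
      simpl. rewrite inv_mul, <- mulA, mulVg, mulg1. reflexivity.
Qed.

Lemma walk_act a x y n : walk adj x y n -> walk adj (act a x) (act a y) n.
Proof. induction 1. constructor. econstructor. apply act_adj; eauto. eauto. Qed.

Lemma walk_app x y z n m : walk adj x y n -> walk adj y z m -> walk adj x z (n + m).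
Proof. induction 1; simpl; intros; eauto using walk. Qed.

Lemma is_dist_act a x y n : is_dist adj x y n -> is_dist adj (act a x) (act a y) n.
Proof.
  intros [W M]. split. now apply walk_act.
  intros m Wm. apply M. apply (walk_act (inv a)) in Wm.
  now rewrite !act_inv_l in Wm.
Qed.

Lemma between_act a x y z : Defs.between adj x y z -> Defs.between adj (act a x) (act a y) (act a z).
Proof.
  intros (p&q&r&H1&H2&H3&H4). exists p, q, r; repeat split; auto using is_dist_act;
  try apply is_dist_act; auto.
Qed.

Lemma convex_hs_act h A : convex adj A -> convex adj (hs_act G h A).
Proof.
  intros C x y z Hx Hy B. unfold hs_act in *.
  apply (C (act (inv h) x) (act (inv h) y)); auto. now apply between_act.
Qed.

Lemma halfspace_hs_act h A : halfspace adj A -> halfspace adj (hs_act G h A).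
Proof.
  intros ((x&Hx)&(y&Hy)&C1&C2). repeat split.
  - exists (act h x). unfold hs_act. now rewrite act_inv_l.
  - exists (act h y). unfold hs_act. now rewrite act_inv_l.
  - now apply convex_hs_act.
  - change (convex adj (hs_act G h (co A))). now apply convex_hs_act.
Qed.

Lemma halfspace_co A : halfspace adj A -> halfspace adj (co A).
Proof.
  intros ((x&Hx)&(y&Hy)&C1&C2). repeat split; auto.
  - exists y; auto.
  - exists x; unfold co; auto.
  - intros a b c Ha Hb B. unfold co in *. intro Hc. apply Hc.
    apply (C1 a b); auto; apply NNPP; auto.
Qed.

Lemma min_exists (P : nat -> Prop) : (exists n, P n) -> exists n, P n /\ forall m, P m -> n <= m.
Proof.
  intros [n Hn]. revert Hn. induction n as [n IH] using (well_founded_induction lt_wf).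
  intros Hn. destruct (classic (exists m, P m /\ m < n)) as [(m&Hm&Hlt)|N].
  - exact (IH m Hlt Hm).
  - exists n. split; auto. intros m Hm. destruct (le_lt_dec n m); auto.
    exfalso; apply N; eauto.
Qed.

Lemma dist_exists (HX : is_median_graph adj) x y : exists n, is_dist adj x y n.
Proof.
  destruct HX as (_&_&Hc&_). destruct (min_exists (fun n => walk adj x y n) (Hc x y)) as (n&H1&H2).
  exists n; split; auto.
Qed.

Lemma walk0 x y : walk adj x y 0 -> x = y.
Proof. intros H; inversion H; auto. Qed.

Lemma between_adj u v m : adj u v -> Defs.between adj u v m -> m = u \/ m = v.
Proof.
  intros A (a&b&c&[Wa _]&[Wb _]&[_ Mc]&E).
  assert (c <= 1) by (apply Mc; econstructor; eauto; constructor).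
  destruct a. left; symmetry; now apply walk0.
  destruct b. right; now apply walk0. lia.
Qed.

Lemma edge_lemma (HX : is_median_graph adj) u v (P Q : V -> Prop) :
  adj u v -> convex adj P -> convex adj (co Q) -> ~ P u -> P v -> ~ Q u -> Q v ->
  forall w, P w -> Q w.
Proof.
  intros A CP CQ Pu Pv Qu Qv w Pw. apply NNPP; intro Qw.
  destruct HX as (_&_&_&Hm). destruct (Hm u v w) as (m&B1&B2&B3&_).
  assert (Pm : P m) by (apply (CP v w); auto).
  assert (Qm : co Q m) by (apply (CQ u w); auto).
  destruct (between_adj u v m A B1); subst; auto.
Qed.

End Basics.
Section Axis.
Variables (V : Type) (adj : V -> V -> Prop) (HX : is_median_graph adj)
  (G : GroupAction V adj) (g : grp G) (o : V) (d : nat)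
  (Hmin : forall x m, is_dist adj x (act G g x) m -> d <= m)
  (Hdo : is_dist adj o (act G g o) d)
  (HG1 : forall P h, halfspace adj P -> ~ seteq (hs_act G h (co P)) P)
  (HG2 : forall P h, halfspace adj P -> ~ transverse P (hs_act G h P)).

Definition pt (n : Z) : V := act G (zpow G g n) o.

Lemma pt_succ n : act G g (pt n) = pt (n + 1).
Proof. unfold pt. rewrite <- actM, zpow_succ_l. reflexivity. Qed.

Lemma pt_pred n : act G (inv G g) (pt n) = pt (n - 1).
Proof.
  replace (pt n) with (pt (n - 1 + 1)) by (f_equal; lia).
  rewrite <- pt_succ. apply act_inv_l.
Qed.

Lemma pt_dist n : is_dist adj (pt n) (act G g (pt n)) d.
Proof.
  rewrite pt_succ. unfold pt. rewrite zpow_succ_r, actM. now apply is_dist_act.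
Qed.

Lemma gP_pt P n : hs_act G g P (pt n) <-> P (pt (n - 1)).
Proof. unfold hs_act. rewrite pt_pred. tauto. Qed.

Lemma nested_g P : halfspace adj P -> nested P (hs_act G g P).
Proof. intros HP. apply NNPP. apply (HG2 P g HP). Qed.

Lemma lemW y (Hy : is_dist adj y (act G g y) d) P (HP : halfspace adj P)
  (H0 : ~ P y) (H1 : P (act G g y)) (H2 : ~ P (act G g (act G g y)))
  (Hdisj : forall v, P v -> P (act G g v) -> False) : False.
Proof.
  destruct Hy as [Wy _].
  assert (split : forall a b n, walk adj a b n -> P (act G g a) -> ~ P (act G g b) ->
    exists u v n1 n2, walk adj a u n1 /\ adj u v /\ walk adj v b n2 /\ n1 + 1 + n2 = n
      /\ P (act G g u) /\ ~ P (act G g v)).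
  { induction 1 as [x|x x' z n Ax Wx IH]; intros Ha Hb.
    - contradiction.
    - destruct (classic (P (act G g x'))) as [Hx'|Hx'].
      + destruct (IH Hx' Hb) as (u&v&n1&n2&W1&A&W2&E&Pu&Pv).
        exists u, v, (S n1), n2. repeat split; auto; try lia. econstructor; eauto.
      + exists x, x', 0, n. repeat split; auto; try lia; constructor. }
  destruct (split _ _ _ Wy H1 H2) as (u&v&n1&n2&W1&A&W2&E&Pu&Pv).
  assert (nPu : ~ P u) by (intro; eapply Hdisj; eauto).
  destruct (classic (P v)) as [HPv|HPv].
  - set (Q := hs_act G (inv G g) (co P)).
    assert (HQ : forall w, Q w <-> ~ P (act G g w)).
    { intro w. unfold Q, hs_act, co. rewrite inv_inv. tauto. }
    assert (hQ : halfspace adj Q) by (apply halfspace_hs_act, halfspace_co; auto).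
    pose proof HP as HP0.
    destruct HP as (_&_&CP&CcP). destruct hQ as (_&_&CQ&CcQ).
    apply (HG1 P (inv G g) HP0).
    assert (nQu : ~ Q u) by (rewrite HQ; tauto).
    assert (Qv : Q v) by (rewrite HQ; tauto).
    split.
    + intros w Hw. exact (edge_lemma _ _ HX u v Q P A CQ CcP nQu Qv nPu HPv w Hw).
    + intros w Hw. exact (edge_lemma _ _ HX u v P Q A CP CcQ nPu HPv nQu Qv w Hw).
  - assert (Wv : walk adj v (act G g v) (n2 + (n1 + 1))).
    { apply walk_app with (act G g y); auto. apply walk_act.
      apply walk_app with u; auto. econstructor; eauto. constructor. }
    destruct (dist_exists _ _ HX v (act G g v)) as (m&Dm).
    destruct (dist_exists _ _ HX v (act G g y)) as (a&Da).
    destruct (dist_exists _ _ HX (act G g y) (act G g v)) as (b&Db).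
    assert (m <= d) by (destruct Dm as [_ M]; rewrite <- E; replace (n1+1+n2) with (n2 + (n1+1)) by lia; auto).
    assert (d <= m) by (apply (Hmin v); auto).
    assert (a <= n2) by (apply (proj2 Da); auto).
    assert (b <= n1 + 1).
    { apply (proj2 Db). apply walk_act. apply walk_app with u; auto. econstructor; eauto. constructor. }
    assert (m <= a + b) by (apply (proj2 Dm); eapply walk_app; [apply Da|apply Db]).
    destruct HP as (_&_&_&CcP).
    apply (CcP v (act G g v) (act G g y)); auto.
    exists a, b, m. repeat split; auto; try apply Da; try apply Db; try apply Dm. lia.
Qed.

Lemma ptS n : act G g (act G g (pt n)) = pt (n + 2).
Proof. rewrite !pt_succ. f_equal; lia. Qed.

Lemma D2 P (HP : halfspace adj P) m :
  ~ P (pt m) -> P (pt (m + 1)) -> ~ P (pt (m + 2)) -> False.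
Proof.
  intros H0 H1 H2.
  destruct (nested_g P HP) as [Hs|[Hs|[Hs|Hs]]].
  - apply H0. apply Hs in H1. apply gP_pt in H1. now replace (m + 1 - 1)%Z with m in H1 by lia.
  - assert (Pm : P (pt (m - 1))) by (apply gP_pt, Hs; exact H0).
    apply (lemW (pt (m - 1)) (pt_dist _) (co P) (halfspace_co _ _ _ HP)).
    + unfold co; tauto.
    + rewrite pt_succ. now replace (m - 1 + 1)%Z with m by lia.
    + rewrite ptS. replace (m - 1 + 2)%Z with (m + 1)%Z by lia. unfold co; tauto.
    + intros v Hv Hgv. apply Hs in Hgv. unfold hs_act in Hgv. rewrite act_inv_l in Hgv. auto.
  - apply (lemW (pt m) (pt_dist _) P HP); auto.
    + now rewrite pt_succ.
    + now rewrite ptS.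
    + intros v Hv Hgv. apply Hs in Hgv. unfold hs_act, co in Hgv. rewrite act_inv_l in Hgv. auto.
  - apply (Hs (pt (m + 2))) in H2. unfold co in H2. rewrite gP_pt in H2.
    apply H2. now replace (m + 2 - 1)%Z with (m + 1)%Z by lia.
Qed.

Lemma FP P (HP : halfspace adj P) m :
  ~ P (pt m) -> P (pt (m + 1)) -> forall k : nat, P (pt (m + 1 + Z.of_nat k)).
Proof.
  intros H0 H1.
  assert (forall k i, i <= k -> P (pt (m + 1 + Z.of_nat i))).
  { induction k; intros i Hi.
    - replace i with 0 by lia. now replace (m + 1 + Z.of_nat 0)%Z with (m + 1)%Z by lia.
    - destruct (Nat.eq_dec i (S k)); [subst|apply IHk; lia].
      apply NNPP; intro Hn.
      destruct k.
      + apply (D2 P HP m); auto. now replace (m + 2)%Z with (m + 1 + Z.of_nat 1)%Z by lia.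
      + destruct (nested_g P HP) as [Hs|[Hs|[Hs|Hs]]].
        * apply H0. apply Hs in H1. apply gP_pt in H1. now replace (m + 1 - 1)%Z with m in H1 by lia.
        * assert (Pm : P (pt (m - 1))) by (apply gP_pt, Hs; exact H0).
          apply (D2 (co P) (halfspace_co _ _ _ HP) (m - 1)); unfold co.
          -- tauto.
          -- now replace (m - 1 + 1)%Z with m by lia.
          -- replace (m - 1 + 2)%Z with (m + 1)%Z by lia. tauto.
        * assert (P2 : P (pt (m + 1 + Z.of_nat 1))) by (apply IHk; lia).
          apply (Hs _ P2). apply gP_pt. now replace (m + 1 + Z.of_nat 1 - 1)%Z with (m + 1)%Z by lia.
        * apply (Hs _ Hn). apply gP_pt.
          replace (m + 1 + Z.of_nat (S (S k)) - 1)%Z with (m + 1 + Z.of_nat (S k))%Z by lia.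
          apply IHk; lia. }
  intro k; apply (H k k); lia.
Qed.

Lemma BP P (HP : halfspace adj P) m :
  ~ P (pt m) -> P (pt (m + 1)) -> forall k : nat, ~ P (pt (m - Z.of_nat k)).
Proof.
  intros H0 H1. induction k.
  - now replace (m - Z.of_nat 0)%Z with m by lia.
  - intro Hk.
    pose proof (FP (co P) (halfspace_co _ _ _ HP) (m - Z.of_nat (S k))) as F.
    unfold co in F.
    refine (F _ _ (S k) _).
    + tauto.
    + now replace (m - Z.of_nat (S k) + 1)%Z with (m - Z.of_nat k)%Z by lia.
    + now replace (m - Z.of_nat (S k) + 1 + Z.of_nat (S k))%Z with (m + 1)%Z by lia.
Qed.

Lemma mono P (HP : halfspace adj P) n : ~ P (pt n) -> P (pt (n + 1)) ->
  (forall K, (n + 1 <= K)%Z -> P (pt K)) /\ (forall L, (L <= n)%Z -> ~ P (pt L)).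
Proof.
  intros H0 H1. split.
  - intros K HK. replace K with (n + 1 + Z.of_nat (Z.to_nat (K - n - 1)))%Z by lia.
    now apply FP.
  - intros L HL. replace L with (n - Z.of_nat (Z.to_nat (n - L)))%Z by lia.
    now apply BP.
Qed.

Lemma comparable P Q : Aplus G g o P -> Aplus G g o Q -> nested P Q ->
  subset P Q \/ subset Q P.
Proof.
  intros (HP&n&Cn) (HQ&m&Cm) N.
  destruct Cn as [Pn Pn1]. destruct Cm as [Qm Qm1].
  destruct (mono P HP n Pn Pn1) as [PF PB].
  destruct (mono Q HQ m Qm Qm1) as [QF QB].
  set (K := (Z.max n m + 1)%Z). set (L := Z.min n m).
  assert (PK : P (pt K)) by (apply PF; lia).
  assert (QK : Q (pt K)) by (apply QF; lia).
  assert (PL : ~ P (pt L)) by (apply PB; lia).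
  assert (QL : ~ Q (pt L)) by (apply QB; lia).
  destruct N as [Hs|[Hs|[Hs|Hs]]].
  - now left.
  - exfalso. apply QL, Hs, PL.
  - exfalso. exact (Hs _ PK QK).
  - right. intros v Qv. apply NNPP. intro Pv. exact (Hs v Pv Qv).
Qed.

End Axis.

Section Comb.
Variables (V : Type) (adj : V -> V -> Prop) (G : GroupAction V adj)
  (Ap : (V -> Prop) -> Prop)
  (Hap : forall P, Ap P -> halfspace adj P)
  (Hcomp : forall P Q, Ap P -> Ap Q -> nested P Q -> subset P Q \/ subset Q P)
  (HG : RAAG_like G) (h : grp G).

Definition sig (X : V -> Prop) := hs_act G h (co X).
Definition tau (C : V -> Prop) := co (hs_act G (inv G h) C).

Lemma sub_sig (A B : V -> Prop) : subset A B -> subset (sig B) (sig A).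
Proof. unfold sig, hs_act, co, subset. intros H v Hv Av. exact (Hv (H _ Av)). Qed.

Lemma sig_sub (A B : V -> Prop) : subset (sig B) (sig A) -> subset A B.
Proof.
  intros Hs v Av. apply NNPP; intro Bv.
  specialize (Hs (act G h v)). unfold sig, hs_act, co in Hs.
  rewrite act_inv_l in Hs. exact (Hs Bv Av).
Qed.

Lemma ssub_sig (A B : V -> Prop) : ssubset A B -> ssubset (sig B) (sig A).
Proof. intros [H1 H2]. split. now apply sub_sig. intro H; apply H2. now apply sig_sub. Qed.

Lemma ssub_sig_inv (A B : V -> Prop) : ssubset (sig B) (sig A) -> ssubset A B.
Proof. intros [H1 H2]. split. now apply sig_sub. intro H; apply H2. now apply sub_sig. Qed.

Lemma sig_tau (C : V -> Prop) : seteq C (sig (tau C)).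
Proof.
  unfold seteq, subset, sig, tau, hs_act, co. rewrite inv_inv. split; intros v.
  - rewrite act_inv_r. tauto.
  - rewrite act_inv_r. intro H. now apply NNPP.
Qed.

Lemma ssub_seteq_r (A B B' : V -> Prop) : ssubset A B -> seteq B B' -> ssubset A B'.
Proof. unfold ssubset, seteq, subset. intros [H1 H2] [E1 E2]. split. intros v Av; apply E1, H1, Av.
  intro H. apply H2. intros v Hv. apply H, E1, Hv. Qed.
Lemma ssub_seteq_l (A A' B : V -> Prop) : seteq A A' -> ssubset A B -> ssubset A' B.
Proof. unfold ssubset, seteq, subset. intros [E1 E2] [H1 H2]. split. intros v Av; apply H1, E2, Av.
  intro H. apply H2. intros v Hv. apply E2, H, Hv. Qed.

Lemma TT (A B : V -> Prop) : tight_sup adj A B -> tight_sup adj (sig B) (sig A).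
Proof.
  intros [H1 H2]. split. now apply ssub_sig.
  intros C HC [S1 S2].
  assert (HC' : halfspace adj (tau C)) by (apply halfspace_co, halfspace_hs_act; auto).
  apply (H2 (tau C) HC'). split.
  - apply ssub_sig_inv. eapply ssub_seteq_l. apply sig_tau. auto.
  - apply ssub_sig_inv. eapply ssub_seteq_r. apply S1. apply sig_tau.
Qed.

Lemma nested_co (A B : V -> Prop) : nested A B -> nested A (co B).
Proof. unfold nested, subset, co. intros [H|[H|[H|H]]].
  - right; right; left. intros v Av Bv. exact (Bv (H v Av)).
  - right; right; right. intros v Av Bv. exact (Bv (H v Av)).
  - left. exact H.
  - right; left. exact H. Qed.

Lemma Dich (P : V -> Prop) : Ap P -> Ap (sig P) -> ssubset P (sig P) \/ ssubset (sig P) P.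
Proof.
  intros HP HsP. destruct HG as (G1&G2&_&_).
  assert (N : nested P (sig P)).
  { apply (nested_co P (hs_act G h P)). apply NNPP, G2, Hap, HP. }
  destruct (Hcomp _ _ HP HsP N) as [S|S].
  - left. split; auto. intro S'. apply (G1 P h (Hap _ HP)). split; auto.
  - right. split; auto. intro S'. apply (G1 P h (Hap _ HP)). split; auto.
Qed.

Lemma step (Pi Pj : V -> Prop) : tight_sup adj Pi Pj -> Ap Pi -> Ap Pj -> Ap (sig Pi) -> Ap (sig Pj) ->
  ssubset (sig Pi) Pi -> ssubset (sig Pj) Pj.
Proof.
  intros T Ai Aj Asi Asj Si.
  destruct (Dich Pj Aj Asj) as [Sj|Sj]; auto. exfalso.
  destruct HG as (G1&G2&G3&G4).
  destruct (classic (subset (sig Pi) Pj)) as [Y|Y].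
  - pose proof (TT _ _ T) as T'.
    destruct (classic (subset Pj (sig Pi))) as [Y2|Y2].
    + apply (G4 Pj h (Hap _ Aj)). split. exact Sj.
      intros C HC [C1 C2]. apply (proj2 T' C HC). split; auto.
      eapply ssub_seteq_l; [|exact C1]. split; auto.
    + apply (proj2 T' Pj (Hap _ Aj)). split; auto. split; auto.
  - assert (N : nested Pj (sig Pi)).
    { apply (nested_co Pj (hs_act G h Pi)). apply NNPP.
      apply (G3 Pj Pi h (Hap _ Aj) (Hap _ Ai)). left; exact T. }
    destruct (Hcomp _ _ Aj Asi N) as [S|S]; [|contradiction].
    apply (proj2 T (sig Pi) (Hap _ Asi)). split; auto. split; auto.
Qed.

Lemma chain (t : list (V -> Prop)) : forall a, tight_chain adj (a :: t) ->
  (forall x, In x (a :: t) -> Ap x /\ Ap (sig x)) ->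
  ssubset (sig a) a ->
  ssubset (sig (last (a :: t) (fun _ => False))) (last (a :: t) (fun _ => False)).
Proof.
  induction t as [|b t IH]; intros a TC Hin Sa; auto.
  destruct TC as [T TC].
  change (last (a :: b :: t) (fun _ => False)) with (last (b :: t) (fun _ => False)).
  apply IH; auto.
  - intros x Hx. apply Hin. right; auto.
  - destruct (Hin a (or_introl eq_refl)). destruct (Hin b (or_intror (or_introl eq_refl))).
    eapply step; eauto.
Qed.

End Comb.

Theorem lemma5p4 (V : Type) (adj : V -> V -> Prop)
  (HX : is_median_graph adj) (G : GroupAction V adj)
  (HG : RAAG_like G) (g : grp G) (o : V)
  (Hg : hyperbolic G g) (Ho : minimizer G g o)
  (alpha : list (V -> Prop)) (Halpha : is_segment adj alpha)
  (HA : Forall (Aplus G g o) alpha) (h : grp G)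
  (HhA : Forall (Aplus G g o) (seg_act G h (rev_seg alpha))) :
  seg_gt (seg_act G h (rev_seg alpha)) alpha \/
  seg_gt alpha (seg_act G h (rev_seg alpha)).
Proof.
  destruct Ho as (d&(_&Hmin)&Hdo).
  pose proof HG as (G1&G2&G3&G4).
  assert (Hcomp : forall P Q, Aplus G g o P -> Aplus G g o Q -> nested P Q ->
     subset P Q \/ subset Q P).
  { intros. eapply comparable; eauto. }
  assert (Hap : forall P, Aplus G g o P -> halfspace adj P) by (intros P [H _]; exact H).
  destruct Halpha as (Hne&_&TC).
  destruct alpha as [|a t]; [contradiction|].
  assert (Hin : forall x, In x (a :: t) -> Aplus G g o x /\ Aplus G g o (sig V adj G h x)).
  { intros x Hx. split. exact (proj1 (Forall_forall _ _) HA x Hx).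
    apply (proj1 (Forall_forall _ _) HhA). unfold seg_act, rev_seg, sig.
    apply in_map. apply -> in_rev. apply in_map. exact Hx. }
  destruct (Dich V adj G _ Hap Hcomp HG h a) as [S|S]; try apply Hin; try (left; reflexivity).
  - left. unfold seg_gt, seg_act, rev_seg. simpl. rewrite map_app. simpl.
    rewrite last_last. exact S.
  - right. pose proof (chain V adj G _ Hap Hcomp HG h t a TC Hin S) as C.
    unfold seg_gt, seg_act, rev_seg.
    set (l := a :: t) in *.
    assert (Hl : l <> nil) by discriminate.
    rewrite (app_removelast_last (fun _ => False) Hl) at 1.
    rewrite map_app, rev_app_distr. simpl. exact C.
Qed.
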